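(* For every positive integer $t$ there exist positive integers $t'$ and $u$ such that every semilinear graph of complexity $t$ is semilinear* of complexity $(t',u)$.
   Context: A function $f:\mathbb{R}^{m}\to\mathbb{R}$ is linear if $f(\mathbf{x})=b+\sum_{i=1}^m a_i\mathbf{x}(i)$ for some reals $a_1,\dots,a_m,b$. A finite simple graph $G$ is semilinear of complexity $t$ if $V(G)\subset\mathbb{R}^d$ for some positive integer $d$, and there are $t$ linear functions $f_1,\dots,f_t:\mathbb{R}^d\times\mathbb{R}^d\to\mathbb{R}$ and a Boolean function $\phi:\{\mathrm{F},\mathrm{T}\}^{3t}\to\{\mathrm{F},\mathrm{T}\}$ such that for distinct $\mathbf{x},\mathbf{y}\in V(G)$, $\{\mathbf{x},\mathbf{y}\}$ is an edge iff $\phi\big(\{f_i(\mathbf{x},\mathbf{y})<0,\ f_i(\mathbf{x},\mathbf{y})\leq 0,\ f_i(\mathbf{x},\mathbf{y})=0\}_{i\in[t]}\big)=\mathrm{T}$ (assumed symmetric in $\mathbf{x},\mathbf{y}$). $G$ is semilinear* of complexity $(t,u)$ if $V(G)\subset\mathbb{R}^d$ and there are $tu$ linear functions $f_{i,j}:\mathbb{R}^d\times\mathbb{R}^d\to\mathbb{R}$, $(i,j)\in[u]\times[t]$, such that for distinct $\mathbf{x},\mathbf{y}\in V(G)$, $\{\mathbf{x},\mathbf{y}\}$ is an edge iff $\bigvee_{i\in[u]}\bigwedge_{j\in[t]}\{f_{i,j}(\mathbf{x},\mathbf{y})<0\}$ is true (assumed symmetric in $\mathbf{x},\mathbf{y}$).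 *)

(* Defs.v *)
From HB Require Import structures.
From mathcomp Require Import all_boot all_order all_algebra.
From mathcomp Require Import Rstruct.
From Stdlib Require Import Reals.
Set Implicit Arguments. Unset Strict Implicit. Unset Printing Implicit Defensive.
Import Order.TTheory GRing.Theory Num.Theory.
Local Open Scope ring_scope.

Notation point d := 'rV[R]_d.

(* A linear function f : R^d x R^d -> R,
   f(x,y) = b + sum_i a_i x(i) + sum_i c_i y(i),
   is given by its coefficients ((a, c), b). *)
Definition linfun (d : nat) : Type := (point d * point d * R)%type.

Definition lin_eval (d : nat) (f : linfun d) (x y : point d) : R :=
  f.2 + \sum_(i < d) f.1.1 0 i * x 0 i + \sum_(i < d) f.1.2 0 i * y 0 i.

(* A finite simple graph with V(G) ⊂ R^d is given by a finite vertex type T,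
   an injective placement p : T -> R^d, and a symmetric irreflexive edge
   relation e on T. *)
Definition simple_graph (T : finType) (e : rel T) : Prop :=
  symmetric e /\ irreflexive e.

(* Semilinear of complexity t: t linear functions and a Boolean function
   phi : {F,T}^{3t} -> {F,T} (inputs indexed by i in [t], each giving the
   triple (f_i < 0, f_i <= 0, f_i = 0)). *)
Definition semilinear_graph (t d : nat) (T : finType) (p : T -> point d) (e : rel T)
  : Prop :=
  exists (f : 'I_t -> linfun d)
         (phi : {ffun 'I_t -> bool * bool * bool} -> bool),
    forall x y : T, x != y ->
      e x y = phi [ffun i => (lin_eval (f i) (p x) (p y) < 0,
                              lin_eval (f i) (p x) (p y) <= 0,
                              lin_eval (f i) (p x) (p y) == 0)].

Definition semilinear_star_graph (t u d : nat) (T : finType) (p : T -> point d)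
  (e : rel T) : Prop :=
  exists f : 'I_u -> 'I_t -> linfun d,
    forall x y : T, x != y ->
      e x y = [exists i : 'I_u, [forall j : 'I_t,
                 lin_eval (f i j) (p x) (p y) < 0]].

(* Main.v *)
Require Import Defs.
From HB Require Import structures.
From mathcomp Require Import all_boot all_order all_algebra.
From mathcomp Require Import Rstruct.
From mathcomp Require Import ring lra.
Notation R := Rdefinitions.R.

Set Implicit Arguments. Unset Strict Implicit. Unset Printing Implicit Defensive.
Import Order.TTheory GRing.Theory Num.Theory.
Local Open Scope ring_scope.

Lemma forall_enum (X : finType) (P : pred X) :
  [forall j : 'I_#|X|, P (enum_val j)] = [forall x, P x].
Proof.
apply/forallP/forallP => H x; last exact: H.
by rewrite -(enum_rankK x); apply: H.
Qed.

Lemma exists_enum (X : finType) (P : pred X) :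
  [exists j : 'I_#|X|, P (enum_val j)] = [exists x, P x].
Proof.
apply/existsP/existsP => [[j Hj]|[x Hx]]; first by exists (enum_val j).
by exists (enum_rank x); rewrite enum_rankK.
Qed.

Lemma lin_evalE d (f : Defs.linfun d) x y : lin_eval f x y =
  (f.2 + \sum_(i < d) f.1.1 0 i * x 0 i + \sum_(i < d) f.1.2 0 i * y 0 i)%R.
Proof. reflexivity. Qed.

Definition lneg d (f : Defs.linfun d) : Defs.linfun d := ((- f.1.1, - f.1.2), - f.2).
Definition lshift d (f : Defs.linfun d) (s : Rdefinitions.R) : Defs.linfun d := (f.1, f.2 + s).
Definition lone d : Defs.linfun d := ((0, 0), 1).

Lemma lin_eval_neg d (f : Defs.linfun d) x y : lin_eval (lneg f) x y = - lin_eval f x y.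
Proof.
rewrite !lin_evalE /=.
rewrite (eq_bigr (fun i => - (f.1.1 0 i * x 0 i))); last by move=> i _; rewrite mxE mulNr.
rewrite [X in (_ + _ + X)%R](eq_bigr (fun i => - (f.1.2 0 i * y 0 i))); last by move=> i _; rewrite mxE mulNr.
by rewrite !sumrN !opprD.
Qed.

Lemma lin_eval_shift d (f : Defs.linfun d) s x y : lin_eval (lshift f s) x y = lin_eval f x y + s.
Proof. rewrite !lin_evalE /=; ring. Qed.

Lemma lin_eval_one d x y : lin_eval (lone d) x y = 1.
Proof.
rewrite lin_evalE /= big1 ?big1 ?addr0 // => i _; by rewrite mxE mul0r.
Qed.

Definition gfun d (eps : R) (s : 'I_3) (f : Defs.linfun d) (b : bool) : Defs.linfun d :=
  if (s : nat) == 0%N then f else if (s : nat) == 1%N then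
    (if b then lshift f (- eps) else lshift (lneg f) (- eps)) else lneg f.

Definition hval (eps : R) (s : 'I_3) (v : R) (b : bool) : R :=
  if (s : nat) == 0%N then v else if (s : nat) == 1%N then
    (if b then v - eps else - v - eps) else - v.

Lemma gfunE d eps s (f : Defs.linfun d) b x y :
  lin_eval (gfun eps s f b) x y = hval eps s (lin_eval f x y) b.
Proof.
rewrite /gfun /hval; case: ifP => _ //; case: ifP => _; last exact: lin_eval_neg.
by case: b; rewrite lin_eval_shift ?lin_eval_neg.
Qed.

Definition sgn (v : R) : 'I_3 := inord (if v < 0 then 0%N else if v == 0 then 1%N else 2%N).

Lemma forall_bool (P : pred bool) : [forall b, P b] = P true && P false.
Proof. by apply/forallP/andP => [H|[H1 H2] []] //; split; apply: H. Qed.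

Lemma condE eps s v : 0 < eps -> (v != 0 -> eps < `|v|) ->
  [forall b, hval eps s v b < 0] = (sgn v == s).
Proof.
move=> he hv; rewrite forall_bool /hval /sgn.
have -> : (inord (if v < 0 then 0%N else if v == 0 then 1%N else 2%N) == s)
   = ((if v < 0 then 0%N else if v == 0 then 1%N else 2%N) == (s : nat)).
  by rewrite -val_eqE /= inordK //; case: ifP => //; case: ifP.
case: (ltrgtP v 0) => Hv;
  [have h := hv (ltr0_neq0 Hv); rewrite ltr0_norm // in h
  | have h := hv (lt0r_neq0 Hv); rewrite gtr0_norm // in h
  | rewrite Hv ];
  case: s => [[|[|[|n]]] Hs] //=;
  first [by [] | (apply/andP; split; lra)
        | (apply/negbTE/nandP; left; rewrite -leNgt; lra)
        | (apply/negbTE/nandP; right; rewrite -leNgt; lra)].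
Qed.
Theorem lemma2p1 :
  forall t : nat, (0 < t)%N ->
  exists t' u : nat, (0 < t')%N /\ (0 < u)%N /\
    forall (d : nat) (T : finType) (p : T -> point d) (e : rel T),
      (0 < d)%N -> injective p -> simple_graph e ->
      semilinear_graph t p e -> semilinear_star_graph t' u p e.
Proof.
move=> t t0.
exists #|{: 'I_t * bool}|, #|{: {ffun 'I_t -> 'I_3}}|.
split; first by apply/card_gt0P; exists (Ordinal t0, true).
split; first by apply/card_gt0P; exists [ffun=> ord0].
move=> d T p e _ _ _ [f [phi Hphi]].
pose v i x y := lin_eval (f i) (p x) (p y).
pose eps0 := \big[Order.min/1]_(k : 'I_t * T * T)
   (if v k.1.1 k.1.2 k.2 == 0 then 1 else `|v k.1.1 k.1.2 k.2|).
have e0 : 0 < eps0.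
  apply: lt_bigmin => // k _; case: ifP => // /negbT; by rewrite normr_gt0.
pose eps := eps0 / 2.
have he : 0 < eps by rewrite divr_gt0.
have hv : forall i x y, v i x y != 0 -> eps < `|v i x y|.
  move=> i x y nz.
  have : eps0 <= (if v i x y == 0 then 1 else `|v i x y|).
    exact: (bigmin_le _ (i, x, y)).
  rewrite (negbTE nz) /eps => h; lra.
pose Phi (s : {ffun 'I_t -> 'I_3}) :=
  phi [ffun i => ((s i : nat) == 0%N, (s i <= 1)%N, (s i : nat) == 1%N)].
exists (fun k j => if Phi (enum_val k)
   then gfun eps (enum_val k (enum_val j).1) (f (enum_val j).1) (enum_val j).2
   else lone d).
move=> x y nxy; rewrite Hphi //.
pose s0 : {ffun 'I_t -> 'I_3} := [ffun i => sgn (v i x y)].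
have -> : [ffun i => (lin_eval (f i) (p x) (p y) < 0,
                      lin_eval (f i) (p x) (p y) <= 0,
                      lin_eval (f i) (p x) (p y) == 0)]
   = [ffun i => ((s0 i : nat) == 0%N, (s0 i <= 1)%N, (s0 i : nat) == 1%N)].
  apply/ffunP => i; rewrite !ffunE /sgn inordK; last by case: ifP => //; case: ifP.
  rewrite -/(v i x y).
  by case: (ltrgtP (v i x y) 0) => Hv //=; rewrite le_eqVlt Hv ?orbT // eq_sym (gt_eqF Hv).
have key : forall k : 'I_#|{: {ffun 'I_t -> 'I_3}}|, [forall j : 'I_#|{: 'I_t * bool}|, lin_eval (if Phi (enum_val k)
   then gfun eps (enum_val k (enum_val j).1) (f (enum_val j).1) (enum_val j).2
   else lone d) (p x) (p y) < 0] = Phi (enum_val k) && (enum_val k == s0).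
  move=> k; case HP: (Phi (enum_val k)) => /=; last first.
    apply: negbTE; apply/forallPn; exists (enum_rank (Ordinal t0, true)).
    by rewrite lin_eval_one ltr10.
  apply/forallP/eqP => [H|->].
    apply/ffunP => i; rewrite ffunE; apply/eqP; rewrite eq_sym -(@condE eps _ (v i x y) he (hv i x y)).
    apply/forallP => b; have := H (enum_rank (i, b)); by rewrite enum_rankK /= gfunE.
  move=> j; rewrite gfunE.
  have : [forall b, hval eps (s0 (enum_val j).1) (v (enum_val j).1 x y) b < 0].
    rewrite condE; [by rewrite /s0 ffunE | done | exact: hv].
  by move/forallP; apply.
rewrite (eq_existsb key).
rewrite (exists_enum (fun s => Phi s && (s == s0))).
apply/idP/existsP => [H|[s /andP[Hs /eqP <-]] //].
by exists s0; rewrite eqxx andbT.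
Qed.
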